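(* Let $c>1$, $P\in[0,1]^{m\times p}$, $W\in\mathbb{R}^{m\times n}$, $U\in\mathbb{Z}_+^{n\times p}$, and for $\delta\in(0,1]$ let $\gamma_k:=12\log(2np/\delta)\max_{\ell\in[p]}\sqrt{1/U_{k\ell}}$ for $k\in[n]$. For any $\delta\in(0,1]$, any ranking $R\in\mathcal{R}$ satisfying $$\forall\ell\in[p],\ \forall k\in[n]:\ \sum_{i\in[m]}\sum_{j\in[k]}P_{i\ell}R_{ij}\le U_{k\ell}\Big(1+\Big(1-\frac1{2\sqrt c}\Big)\gamma_k\Big)$$ satisfies the $(c\gamma,\delta)$-constraint.
   Context: $\mathcal{R}$ is the set of rankings: matrices $R\in\{0,1\}^{m\times n}$ with $\sum_{j} R_{ij}\le 1$ for every item $i\in[m]$ and $\sum_{i} R_{ij}=1$ for every position $j\in[n]$. Noise model: the groups $G_1,\dots,G_p\subseteq[m]$ are random with $\Pr[i\in G_\ell]=P_{i\ell}$, and events concerning distinct items are independent. For $\varepsilon\in\mathbb{R}^n_{\ge0}$, a ranking $R$ satisfies the $(\varepsilon,\delta)$-constraint if with probability at least $1-\delta$ over the groups, $\sum_{i\in G_\ell}\sum_{j=1}^k R_{ij}\le U_{k\ell}(1+\varepsilon_k)$ for all $k\in[n],\ell\in[p]$. *)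

(* Defs.v *)
From HB Require Import structures.
From mathcomp Require Import all_boot all_order all_algebra.
From mathcomp Require Import reals exp.
Set Implicit Arguments. Unset Strict Implicit. Unset Printing Implicit Defensive.
Import Order.TTheory GRing.Theory Num.Theory.
Local Open Scope ring_scope.

(* Rankings: R in {0,1}^{m x n}, each item in at most one position,
   each position filled by exactly one item. *)
Definition is_ranking (R : realType) (m n : nat) (Rk : 'M[R]_(m, n)) : Prop :=
  (forall i j, Rk i j = 0 \/ Rk i j = 1) /\
  (forall i, \sum_(j < n) Rk i j <= 1) /\
  (forall j, \sum_(i < m) Rk i j = 1).

(* Outcome of the noise: for each item i, the set of groups containing i.
   G_l = [set i | l \in x i]. *)
Definition outcome (m p : nat) := {ffun 'I_m -> {set 'I_p}}.

(* A noise model with marginals P and independence across distinct items: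
   the law of the outcome is the product over items of per-item laws q i
   (a distribution on {set 'I_p}, arbitrary correlation among groups for
   the same item), with Pr[i \in G_l] = P i l. *)
Definition noise_model (R : realType) (m p : nat) (P : 'M[R]_(m, p))
    (q : 'I_m -> {set 'I_p} -> R) : Prop :=
  (forall i S, 0 <= q i S) /\
  (forall i, \sum_(S : {set 'I_p}) q i S = 1) /\
  (forall i l, \sum_(S : {set 'I_p} | l \in S) q i S = P i l).

Definition prob (R : realType) (m p : nat) (q : 'I_m -> {set 'I_p} -> R)
    (E : pred (outcome m p)) : R :=
  \sum_(x : outcome m p | E x) \prod_(i < m) q i (x i).

(* Group-count of the top-(k+1) positions (k : 'I_n stands for position k+1). *)
Definition top_count (R : realType) (m n p : nat) (Rk : 'M[R]_(m, n))
    (x : outcome m p) (k : 'I_n) (l : 'I_p) : R :=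
  \sum_(i < m | l \in x i) \sum_(j < n | (j <= k)%N) Rk i j.

Definition satisfies_constraint (R : realType) (m n p : nat)
    (q : 'I_m -> {set 'I_p} -> R) (U : 'I_n -> 'I_p -> nat)
    (Rk : 'M[R]_(m, n)) (eps : 'I_n -> R) (delta : R) : Prop :=
  prob q (fun x => [forall k, forall l,
      top_count Rk x k l <= (U k l)%:R * (1 + eps k)]) >= 1 - delta.

Definition gamma (R : realType) (n p : nat) (U : 'I_n -> 'I_p -> nat)
    (delta : R) (k : 'I_n) : R :=
  12 * ln ((2 * n * p)%:R / delta) *
  \big[Num.max/0]_(l < p) Num.sqrt (((U k l)%:R)^-1).

(* Main.v *)
Require Import Defs.
From HB Require Import structures.
From mathcomp Require Import all_boot all_order all_algebra.
From mathcomp Require Import reals exp sequences.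
From mathcomp Require Import ring lra.
Set Implicit Arguments. Unset Strict Implicit. Unset Printing Implicit Defensive.
Import Order.TTheory GRing.Theory Num.Theory.
Local Open Scope ring_scope.

Lemma poly_s (R : realType) (s a g : R) : 1 <= s -> a * s = s - 1/2 -> 0 <= g ->
  g * (4*a + 2 - 4*(s*s)) + g*g*(6*a + 1 - 4*(s*s)) <= 0.
Proof.
move=> s1 hA g0.
have s0 : 0 < s by lra.
have h1 : 4*a + 2 - 4*(s*s) <= 0.
  have e : s * (4 * a + 2 - 4 * (s * s)) = 4*(a*s) + 2*s - 4*s*s*s by ring.
  have : s * (4 * a + 2 - 4 * (s * s)) <= 0 by rewrite e hA; nra.
  nra.
have h2 : 6*a + 1 - 4*(s*s) <= 0.
  have e : s * (6 * a + 1 - 4 * (s * s)) = 6*(a*s) + s - 4*s*s*s by ring.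
  have : s * (6 * a + 1 - 4 * (s * s)) <= 0 by rewrite e hA; nra.
  nra.
nra.
Qed.

Lemma key_alg (R : realType) (s a U r L l2 L' g z mu : R) :
  1 <= s -> a * s = s - 1/2 -> 1 <= U -> 0 <= r -> r*r*U = 1 -> 1/9 <= l2 -> 0 <= L' ->
  L = l2 + L' -> 6*L*r <= g ->
  (z - 1) * (2 + 2*g) <= g -> 0 <= mu ->
  mu <= U * (1 + a * (2*g)) ->
  (z-1)*mu - g / (2 + 3*g) * (U*(1 + s*s*(2*g))) <= - L'.
Proof.
move=> s1 hA U1 r0 rU l29 L'0 hL hg hz mu0 hmu.
have L0 : 0 < L by lra.
have Lr : 0 <= L*r by apply: mulr_ge0; lra.
have g0 : 0 <= g by lra.
have Ug2 : 36*L*L <= U*g*g.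
  have : (6*L*r)*(6*L*r) <= g*g by nra.
  move=> h. have : U*((6*L*r)*(6*L*r)) <= U*(g*g) by rewrite ler_wpM2l //; lra.
  have -> : U * (6 * L * r * (6 * L * r)) = 36*L*L*(r*r*U) by ring.
  rewrite rU; lra.
have Ur : 1 <= U*r.
  have : 1 <= (U*r)*(U*r).
    have -> : U*r*(U*r) = U*(r*r*U) by ring.
    rewrite rU; lra.
  nra.
have Ug : 6*L <= U*g.
  have : U*(6*L*r) <= U*g by rewrite ler_wpM2l //; lra.
  nra.
have C1 : 4*L' + 6*g*L' <= U*g*g.
  have : L * (36 * l2*L + 6*g*L') <= L * (U*g*g).
    have -> : L*(36 * l2*L + 6*g*L') = l2*(36*L*L) + L'*(g*(6*L)) by ring.
    have -> : L*(U*g*g) = l2*(U*g*g) + L'*(g*(U*g)) by rewrite hL; ring.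
    apply: lerD; first by rewrite ler_wpM2l //; lra.
    rewrite ler_wpM2l // ler_wpM2l //.
  rewrite ler_pM2l // => h. nra.
have p1 : 0 < 2 + 2*g by lra.
have p2 : 0 < 2 + 3*g by lra.
have hz' : z - 1 <= g / (2 + 2*g) by rewrite ler_pdivlMr.
have E1 : (z-1)*mu <= g/(2+2*g) * (U * (1 + a * (2*g))).
  apply: (le_trans (ler_wpM2r mu0 hz')). apply: ler_wpM2l => //.
  by apply: divr_ge0; lra.
apply: (le_trans (lerB E1 (lexx _))).
have P := @poly_s _ s a g s1 hA g0.
have -> : g / (2 + 2 * g) * (U * (1 + a * (2 * g))) -
    g / (2 + 3 * g) * (U * (1 + s * s * (2 * g))) =
    U * (g * (g * (4*a + 2 - 4*(s*s)) + g*g*(6*a + 1 - 4*(s*s))) - g*g*(1 + g))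
     / ((2 + 2*g) * (2 + 3*g)).
  field. by apply/andP; split; apply/lt0r_neq0 => //; lra.
rewrite ler_pdivrMr; last by nra.
have Q : g * (g * (4*a + 2 - 4*(s*s)) + g*g*(6*a + 1 - 4*(s*s))) <= 0 by nra.
have : U * (g * (g * (4*a + 2 - 4*(s*s)) + g*g*(6*a + 1 - 4*(s*s)))) <= 0 by nra.
have : (1+g)*(4*L' + 6*g*L') <= (1+g)*(U*g*g) by rewrite ler_wpM2l //; lra.
nra.
Qed.

Lemma total_prob (R : realType) m p (P : 'M[R]_(m, p)) q :
  noise_model P q -> \sum_(x : outcome m p) \prod_(i < m) q i (x i) = 1.
Proof.
case=> _ [h1 _]; rewrite -(bigA_distr_bigA (fun i S => q i S)) /=.
by apply: big1 => i _; rewrite h1.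
Qed.

Lemma expect_prod (R : realType) m p (q f : 'I_m -> {set 'I_p} -> R) :
  \sum_(x : outcome m p) \prod_(i < m) q i (x i) * \prod_(i < m) f i (x i) =
  \prod_(i < m) \sum_(S : {set 'I_p}) q i S * f i S.
Proof.
under eq_bigr do rewrite -big_split /=.
by rewrite (bigA_distr_bigA (fun i S => q i S * f i S)).
Qed.

Lemma union_bound (R : realType) (T I J : finType) (w : T -> R) (E : pred T)
   (F : I -> J -> pred T) :
 (forall x, 0 <= w x) -> (forall x, ~~ E x -> exists i j, F i j x) ->
 \sum_(x | ~~ E x) w x <= \sum_i \sum_j \sum_(x | F i j x) w x.
Proof.
move=> w0 hF.
have -> : \sum_i \sum_j \sum_(x | F i j x) w x =
          \sum_x \sum_i \sum_j (if F i j x then w x else 0).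
  under eq_bigr do under eq_bigr do rewrite big_mkcond.
  under eq_bigr do rewrite exchange_big.
  by rewrite exchange_big.
rewrite [X in X <= _]big_mkcond /=; apply: ler_sum => x _.
case: ifP => [hE|_]; last by do 2! (apply: sumr_ge0 => ? _); case: ifP.
have [i [j hij]] := hF x hE.
rewrite (bigD1 i) //= (bigD1 j) //= hij.
rewrite -addrA lerDl; apply: addr_ge0.
  by apply: sumr_ge0 => ? _; case: ifP.
by do 2! (apply: sumr_ge0 => ? _); case: ifP.
Qed.

Lemma row01 (R : realType) m n (Rk : 'M[R]_(m, n)) (k : 'I_n) i :
  is_ranking Rk ->
  \sum_(j < n | (j <= k)%N) Rk i j = 0 \/ \sum_(j < n | (j <= k)%N) Rk i j = 1.
Proof.
case=> h01 [hrow _]; set a := \sum_(j < n | (j <= k)%N) Rk i j.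
have R0 j : 0 <= Rk i j by case: (h01 i j) => ->; lra.
have a0 : 0 <= a by apply: sumr_ge0.
have a1 : a <= 1.
  apply: le_trans (hrow i); rewrite [X in _ <= X](bigID (fun j : 'I_n => (j <= k)%N)) /=.
  by rewrite lerDl; apply: sumr_ge0.
case: (boolP [exists j : 'I_n, (j <= k)%N && (Rk i j == 1)]).
  case/existsP=> j /andP [jk /eqP hj]; right; apply: le_anti; rewrite a1 /=.
  rewrite /a (bigD1 j) //= hj lerDl; apply: sumr_ge0 => ? _; exact: R0.
move=> hn; left; apply: big1 => j jk.
case: (h01 i j) => // hj; exfalso; move/negP: hn; apply; apply/existsP; exists j.
by rewrite jk hj eqxx.
Qed.

Lemma fail_bound (R : realType) m n p (P : 'M[R]_(m, p)) q (Rk : 'M[R]_(m, n))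
  (k : 'I_n) (l : 'I_p) (T lam : R) :
  noise_model P q -> is_ranking Rk -> 0 <= lam ->
  prob q (fun x => T < top_count Rk x k l) <=
  expR ((expR lam - 1) * (\sum_(i < m) \sum_(j < n | (j <= k)%N) P i l * Rk i j)
        - lam * T).
Proof.
move=> hq hR lam0.
have [q0 [q1 qP]] := hq.
set a := fun i => \sum_(j < n | (j <= k)%N) Rk i j.
have a01 i : a i = 0 \/ a i = 1 by exact: (@row01 R m n Rk k i hR).
have top x : top_count Rk x k l = \sum_(i < m) (l \in x i)%:R * a i.
  rewrite /top_count big_mkcond; apply: eq_bigr => i _.
  by case: (l \in x i); rewrite ?mul1r ?mul0r.
set w := fun x : outcome m p => \prod_(i < m) q i (x i).
have w0 x : 0 <= w x by apply: prodr_ge0.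
rewrite /prob.
apply: (@le_trans _ _ (\sum_(x : outcome m p) w x * expR (lam * (top_count Rk x k l - T)))).
  rewrite [X in _ <= X](bigID (fun x => T < top_count Rk x k l)) /=.
  apply: ler_wpDr; first by apply: sumr_ge0 => x _; apply: mulr_ge0 => //; exact: expR_ge0.
  apply: ler_sum => x hx; rewrite -[X in X <= _]mulr1; apply: ler_wpM2l; first exact: w0.
  apply: le_trans (expR_ge1Dx _).
  rewrite lerDl; apply: mulr_ge0 => //; rewrite subr_ge0; exact: ltW.
have E x : expR (lam * (top_count Rk x k l - T)) =
    expR (- (lam * T)) * \prod_(i < m) expR (lam * ((l \in x i)%:R * a i)).
  by rewrite -expR_sum -expRD top mulrBr mulr_sumr addrC.
under eq_bigr do rewrite E mulrCA.
rewrite -mulr_sumr /w (expect_prod q (fun i S => expR (lam * ((l \in S)%:R * a i)))) /=.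
set z := expR lam.
have F i S : expR (lam * ((l \in S)%:R * a i)) = 1 + (l \in S)%:R * a i * (z - 1).
  case: (l \in S); case: (a01 i) => ->; rewrite ?mul0r ?mulr0 ?mul1r ?mulr1 ?expR0 /z; ring.
have G i : \sum_(S : {set 'I_p}) q i S * expR (lam * ((l \in S)%:R * a i)) =
           1 + P i l * a i * (z - 1).
  under eq_bigr do rewrite F mulrDr mulr1.
  rewrite big_split /= q1; congr (_ + _).
  rewrite -qP [in RHS]big_mkcond /= !mulr_suml; apply: eq_bigr => S _.
  case: (l \in S) => /=; ring.
under eq_bigr do rewrite G.
apply: (@le_trans _ _ (expR (- (lam * T)) * \prod_(i < m) expR (P i l * a i * (z - 1)))).
  apply: ler_wpM2l; first exact: expR_ge0.
  apply: ler_prod => i _; rewrite expR_ge1Dx andbT.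
  have z1 : 0 <= z - 1.
    by rewrite subr_ge0 /z; apply: le_trans (expR_ge1Dx _); rewrite lerDl.
  have P0 : 0 <= P i l by rewrite -qP; apply: sumr_ge0.
  have a0 : 0 <= a i by case: (a01 i) => ->; lra.
  by apply: addr_ge0 => //; apply: mulr_ge0 => //; apply: mulr_ge0.
rewrite -expR_sum -expRD addrC le_eqVlt; apply/orP; left; apply/eqP; congr expR; congr (_ - _).
rewrite mulr_sumr; apply: eq_bigr => i _; by rewrite /a mulr_sumr [LHS]mulrC.
Qed.

Lemma ln2_ge (R : realType) : 1/9 <= ln (2 : R).
Proof.
have e : expR (1/9 : R) <= 2.
  have h1 := expRxMexpNx_1 (1/9 : R).
  have h2 := expR_ge1Dx (- (1/9) : R).
  have h3 := expR_gt0 (1/9 : R).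
  nra.
rewrite -[X in X <= _](expRK (1/9 : R)) ler_ln // posrE ?expR_gt0 //.
Qed.

Theorem proposition6p1 (R : realType) (m n p : nat) (c : R)
    (P : 'M[R]_(m, p)) (W : 'M[R]_(m, n)) (U : 'I_n -> 'I_p -> nat)
    (q : 'I_m -> {set 'I_p} -> R) (delta : R) (Rk : 'M[R]_(m, n)) :
  1 < c ->
  (forall i l, 0 <= P i l <= 1) ->
  (forall k l, (0 < U k l)%N) ->
  noise_model P q ->
  0 < delta <= 1 ->
  is_ranking Rk ->
  (forall (l : 'I_p) (k : 'I_n),
      \sum_(i < m) \sum_(j < n | (j <= k)%N) P i l * Rk i j <=
      (U k l)%:R * (1 + (1 - (2 * Num.sqrt c)^-1) * gamma U delta k)) ->
  satisfies_constraint q U Rk (fun k => c * gamma U delta k) delta.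
Proof.
move=> c1 P01 U0 hq /andP [d0 d1] hR hyp.
rewrite /satisfies_constraint /prob.
set good := (fun x : outcome m p => [forall k, forall l,
      top_count Rk x k l <= (U k l)%:R * (1 + c * gamma U delta k)]).
have tot := total_prob hq.
rewrite (bigID good) /= in tot.
set w := fun x : outcome m p => \prod_(i < m) q i (x i).
have w0 x : 0 <= w x by apply: prodr_ge0 => i _; case: hq => q0 _; exact: q0.
have B := @union_bound R (outcome m p) _ _ w good
   (fun k l x => (U k l)%:R * (1 + c * gamma U delta k) < top_count Rk x k l) w0.
have B' : \sum_(x | ~~ good x) w x <= delta.
  apply: le_trans (B _) _.
    move=> x /forallPn [k /forallPn [l]]; rewrite -ltNge => h.
    by exists k, l.
  have per : forall k l, \sum_(x | (U k l)%:R * (1 + c * gamma U delta k) < top_count Rk x k l) w x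
               <= delta / (n * p)%:R.
    move=> k l.
    have npos : (0 < n * p)%N by rewrite muln_gt0 (leq_ltn_trans _ (ltn_ord k)) ?(leq_ltn_trans _ (ltn_ord l)).
    have npR : 0 < (n * p)%:R :> R by rewrite ltr0n.
    set s := Num.sqrt c.
    have s1 : 1 <= s by rewrite /s -sqrtr1 ler_sqrt; lra.
    have ss : s * s = c by rewrite /s -expr2 sqr_sqrtr //; lra.
    set a := 1 - (2 * s)^-1.
    have hA : a * s = s - 1/2.
      rewrite /a; field; apply/lt0r_neq0; lra.
    set Uk : R := (U k l)%:R.
    have U1 : 1 <= Uk by rewrite /Uk ler1n U0.
    set r := Num.sqrt (Uk^-1).
    have r0 : 0 <= r by apply: sqrtr_ge0.
    have rU : r * r * Uk = 1.
      rewrite /r -expr2 sqr_sqrtr ?invr_ge0 ?mulVf //; try lra.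
    set L' := ln ((n * p)%:R / delta).
    have ndpos : 0 < (n * p)%:R / delta by apply: divr_gt0.
    have L'0 : 0 <= L'.
      apply: ln_ge0; rewrite ler_pdivlMr // mul1r; apply: le_trans d1 _.
      by rewrite ler1n.
    set L := ln ((2 * n * p)%:R / delta).
    have hL : L = ln 2 + L'.
      rewrite /L /L' -mulnA natrM -mulrA lnM // posrE //.
    have L0 : 0 <= L by rewrite hL; have := ln2_ge R; lra.
    set gam := gamma U delta k.
    have hgam : gam = 12 * L * \big[Num.max/0]_(l0 < p) Num.sqrt (((U k l0)%:R)^-1) by [].
    have hg : 6 * L * r <= gam / 2.
      rewrite hgam.
      have hm : r <= \big[Num.max/0]_(l0 < p) Num.sqrt (((U k l0)%:R)^-1).
        exact: (le_bigmax 0 (fun l0 => Num.sqrt (((U k l0)%:R)^-1 : R)) l).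
      have : (6 * L) * r <= (6 * L) * \big[Num.max/0]_(l0 < p) Num.sqrt (((U k l0)%:R)^-1 : R).
        by apply: ler_wpM2l => //; lra.
      lra.
    set g := gam / 2.
    have g0 : 0 <= g.
      apply: le_trans hg; apply: mulr_ge0 => //; lra.
    set lam := g / (2 + 3 * g).
    have lam0 : 0 <= lam by apply: divr_ge0; lra.
    set z := expR lam.
    have hz : (z - 1) * (2 + 2 * g) <= g.
      have h1 := expRxMexpNx_1 lam.
      have h2 := expR_ge1Dx (- lam).
      have z0 : 0 < z by apply: expR_gt0.
      have e : (1 - lam) * (2 + 3 * g) = 2 + 2 * g.
        rewrite /lam; field; apply/lt0r_neq0; lra.
      have : z * (1 - lam) <= 1.
        rewrite -h1 /z; apply: ler_wpM2l; [exact: ltW | lra].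
      move=> h3.
      have : z * (1 - lam) * (2 + 3 * g) <= 2 + 3 * g.
        by rewrite -[X in _ <= X]mul1r; apply: ler_wpM2r => //; lra.
      rewrite -mulrA e; lra.
    set mu := \sum_(i < m) \sum_(j < n | (j <= k)%N) P i l * Rk i j.
    have mu0 : 0 <= mu.
      apply: sumr_ge0 => i _; apply: sumr_ge0 => j _; apply: mulr_ge0.
        by case/andP: (P01 i l).
      by case: hR => h01 _; case: (h01 i j) => ->; lra.
    have hmu : mu <= Uk * (1 + a * (2 * g)).
      by have := hyp l k; rewrite /g /a /s /Uk -/gam; congr (_ <= _ * (1 + _ * _)); field.
    have K := key_alg s1 hA U1 r0 rU (ln2_ge R) L'0 hL hg hz mu0 hmu.
    apply: le_trans (@fail_bound R m n p P q Rk k l (Uk * (1 + c * gam)) lam hq hR lam0) _.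
    rewrite -/mu -/z.
    have -> : delta / (n * p)%:R = expR (- L').
      rewrite expRN /L' lnK ?posrE // invf_div //.
    rewrite ler_expR; rewrite ss in K.
    have e2 : 2 * g = gam by rewrite /g; field.
    by rewrite e2 in K.
  apply: (@le_trans _ _ (\sum_(k < n) \sum_(l < p) delta / (n * p)%:R)).
    by apply: ler_sum => k _; apply: ler_sum => l _; exact: per.
  rewrite sumr_const card_ord /=.
  rewrite sumr_const card_ord -mulrnA.
  case: (posnP (p * n)) => [->|pn]; first by rewrite mulr0n; lra.
  rewrite (mulnC p n) -[_ *+ (n * p)]mulr_natl mulrC -mulrA mulVf ?mulr1 //.
  by rewrite pnatr_eq0 -lt0n mulnC.
have -> : \sum_(x | good x) w x = 1 - \sum_(x | ~~ good x) w x by rewrite -tot addrK.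
lra.
Qed.
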